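(* Let $A$ be a profinite algebra and let $C$ be any coalgebra with $A=C^*$. If $H$ is a simple left $A$-module which embeds in $A$ (as a left $A$-module), then $H$ is a rational $C^*$-module.
   Context: A profinite algebra is an algebra over a field which is an inverse limit of finite dimensional algebras, equivalently the dual algebra $C^*$ of a coalgebra $C$. A left $C^*$-module $M$ is rational if it arises from a right $C$-comodule structure via $f\rightharpoonup m=\sum m_0f(m_1)$, i.e. for every $m\in M$ there are $m_1,\dots,m_n\in M$ and $c_1,\dots,c_n\in C$ with $f\rightharpoonup m=\sum_i f(c_i)m_i$ for all $f\in C^*$. *)

(* Defs.v *)
From HB Require Import structures.
From mathcomp Require Import all_boot all_order all_algebra.
Set Implicit Arguments. Unset Strict Implicit. Unset Printing Implicit Defensive.
Import GRing.Theory.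
Local Open Scope ring_scope.

(* Conventions: k a field; a coalgebra C is a k-vector space with a
   comultiplication given by representatives delta c : seq (C * C)
   (Delta c = sum_{p in delta c} p.1 (x) p.2) and a counit eps.
   Elements of the dual algebra C^* are k-linear maps C -> k. *)

Definition islin (k : fieldType) (V : lmodType k) (f : V -> k) : Prop :=
  forall (a : k) (x y : V), f (a *: x + y) = a * f x + f y.

Definition conv (k : fieldType) (C : lmodType k) (delta : C -> seq (C * C))
  (f g : C -> k) : C -> k :=
  fun c => \sum_(p <- delta c) f p.1 * g p.2.

(* Coalgebra axioms, tested against linear functionals (which separate points
   of C (x) C and C (x) C (x) C over a field). *)
Definition is_coalgebra (k : fieldType) (C : lmodType k)
  (delta : C -> seq (C * C)) (eps : C -> k) : Prop :=
  [/\ islin eps,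
      (* linearity of Delta *)
      (forall f g, islin f -> islin g -> islin (conv delta f g)),
      (forall f g h, islin f -> islin g -> islin h -> forall c : C,
          \sum_(p <- delta c) conv delta f g p.1 * h p.2 =
          \sum_(p <- delta c) f p.1 * conv delta g h p.2)
    &
      (forall f, islin f -> forall c : C,
          conv delta eps f c = f c /\ conv delta f eps c = f c)].

Definition is_dual_module (k : fieldType) (C : lmodType k)
  (delta : C -> seq (C * C)) (eps : C -> k) (M : lmodType k)
  (act : (C -> k) -> M -> M) : Prop :=
  [/\ (forall f, islin f -> forall (a : k) (m1 m2 : M),
          act f (a *: m1 + m2) = a *: act f m1 + act f m2),
      (forall f g, islin f -> islin g -> forall (a : k) (m : M),
          act (fun c => a * f c + g c) m = a *: act f m + act g m),
      (forall f g, islin f -> islin g -> forall m : M,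
          act (conv delta f g) m = act f (act g m))
    & (forall m : M, act eps m = m)].

Definition is_submodule (k : fieldType) (C : lmodType k) (M : lmodType k)
  (act : (C -> k) -> M -> M) (S : M -> Prop) : Prop :=
  [/\ S 0,
      (forall (a : k) (x y : M), S x -> S y -> S (a *: x + y))
    & (forall f, islin f -> forall x, S x -> S (act f x))].

Definition is_simple_module (k : fieldType) (C : lmodType k) (M : lmodType k)
  (act : (C -> k) -> M -> M) : Prop :=
  (exists m : M, m != 0) /\
  forall S : M -> Prop, is_submodule act S ->
    (forall x, S x -> x = 0) \/ (forall x, S x).

Definition embeds_in_dual (k : fieldType) (C : lmodType k)
  (delta : C -> seq (C * C)) (M : lmodType k)
  (act : (C -> k) -> M -> M) : Prop :=
  exists phi : M -> (C -> k),
    [/\ (forall m, islin (phi m)),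
        (forall (a : k) (m1 m2 : M) (c : C),
            phi (a *: m1 + m2) c = a * phi m1 c + phi m2 c),
        (forall f, islin f -> forall m, phi (act f m) = conv delta f (phi m))
      & injective phi].

Definition is_rational (k : fieldType) (C : lmodType k) (M : lmodType k)
  (act : (C -> k) -> M -> M) : Prop :=
  forall m : M, exists s : seq (M * C),
    forall f, islin f -> act f m = \sum_(p <- s) f p.2 *: p.1.

(* Main.v *)
Require Import Defs.
From mathcomp Require Import all_boot all_order all_algebra.
From Stdlib Require Import Classical FunctionalExtensionality.
From Stdlib Require List.
Set Implicit Arguments. Unset Strict Implicit. Unset Printing Implicit Defensive.
Import GRing.Theory.
Local Open Scope ring_scope.

Section Helpers.
Variables (k : fieldType) (C : lmodType k).

Lemma islin_comb (a : k) (f g : C -> k) : islin f -> islin g ->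
  islin (fun x => a * f x + g x).
Proof.
move=> hf hg b x y; rewrite hf hg.
rewrite !mulrDr !mulrA (mulrC a b); rewrite -!addrA; congr (_ + _).
by rewrite addrCA.
Qed.

Lemma islin_scale (a : k) (f : C -> k) : islin f -> islin (fun x => a * f x).
Proof. by move=> hf b x y; rewrite hf mulrDr !mulrA (mulrC a b). Qed.

Lemma islin_sub (f g : C -> k) : islin f -> islin g -> islin (fun x => f x - g x).
Proof.
move=> hf hg b x y; rewrite hf hg mulrBr opprD !addrA; congr (_ + _).
by rewrite -!addrA; congr (_ + _); rewrite addrC.
Qed.

Lemma islin_sum (S : seq (C * (C -> k))) (f : C -> k) :
  (forall q, List.In q S -> islin q.2) ->
  islin (fun x => \sum_(q <- S) f q.1 * q.2 x).
Proof.
elim: S => [|q S IH] hS b x y.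
  by rewrite !big_nil mulr0 addr0.
rewrite !big_cons.
have hq : islin q.2 by apply: hS; left.
have IH' := IH (fun r hr => hS r (or_intror hr)).
rewrite hq IH' mulrDr !mulrDr !mulrA (mulrC b (f q.1)) -!addrA; congr (_ + _).
by rewrite addrCA.
Qed.

Lemma interp (X : seq C) : exists S : seq (C * (C -> k)),
  (forall q, List.In q S -> islin q.2) /\
  forall f, islin f -> forall y, y \in X -> f y = \sum_(q <- S) f q.1 * q.2 y.
Proof.
elim: X => [|y X IHX].
  by exists [::]; split.
have [S [hS hX]] := IHX.
case: (classic (forall f, islin f -> f y = \sum_(q <- S) f q.1 * q.2 y)) => hy.
  exists S; split => // f hf z; rewrite in_cons => /orP [/eqP -> | hz].
    exact: hy.
  exact: hX.
have [f0 hf0n] := not_all_ex_not _ _ hy.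
have [hf0 hne] := imply_to_and _ _ hf0n.
set d := f0 y - \sum_(q <- S) f0 q.1 * q.2 y.
have hd : d != 0 by rewrite subr_eq0; apply/eqP.
pose e := fun x => d^-1 * (f0 x - \sum_(q <- S) f0 q.1 * q.2 x).
have he : islin e.
  apply: islin_scale; apply: islin_sub => //; exact: islin_sum.
have ey : e y = 1 by rewrite /e -/d mulVf.
have eX : forall z, z \in X -> e z = 0.
  by move=> z hz; rewrite /e -hX // subrr mulr0.
exists ((y, e) :: [seq (q.1, fun x => q.2 x - q.2 y * e x) | q <- S]); split.
  move=> q /= [<- // | /List.in_map_iff [r [<- hr]]] /=.
  apply: islin_sub; first exact: hS.
  exact: islin_scale.
move=> f hf z; rewrite big_cons big_map /=.
under eq_bigr do rewrite mulrBr.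
rewrite sumrB.
under [X in _ - X]eq_bigr do rewrite mulrA.
rewrite -mulr_suml.
rewrite in_cons => /orP [/eqP -> | hz].
  by rewrite ey !mulr1 subrr addr0.
by rewrite eX // !mulr0 subr0 add0r -hX.
Qed.

End Helpers.

Theorem proposition6p2 (k : fieldType) (C : lmodType k)
  (delta : C -> seq (C * C)) (eps : C -> k) (M : lmodType k)
  (act : (C -> k) -> M -> M) :
  is_coalgebra delta eps ->
  is_dual_module delta eps act ->
  is_simple_module act ->
  embeds_in_dual delta act ->
  is_rational act.
Proof.
move=> [heps hconv _ _] [hA1 hA2 hA3 hA4] [[m0 hm0] hsimp]
  [phi [hphil hphi1 hphi2 hinj]].
have act0 : forall f, islin f -> act f 0 = 0.
  move=> f hf; have := hA1 f hf (-1) 0 0.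
  by rewrite scaler0 addr0 scaleN1r addNr.
have actz : forall m, act (fun _ => 0) m = 0.
  move=> m.
  have hz : islin (fun _ : C => (0 : k)) by move=> ???; rewrite mulr0 addr0.
  have := hA2 _ _ hz hz (-1) m; rewrite scaleN1r addNr.
  have -> : (fun c : C => -1 * 0 + 0) = (fun _ : C => (0 : k)).
    by apply: functional_extensionality => ?; rewrite mulr0 addr0.
  by [].
have actsum : forall (S : seq (C * (C -> k))) (f : C -> k) m,
    (forall q, List.In q S -> islin q.2) ->
    act (fun x => \sum_(q <- S) f q.1 * q.2 x) m =
    \sum_(q <- S) f q.1 *: act q.2 m.
  move=> S f m; elim: S => [|q S IH] hS.
    rewrite big_nil.
    have -> : (fun x : C => \sum_(q <- [::]) f q.1 * q.2 x) = (fun _ => 0).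
      by apply: functional_extensionality => ?; rewrite big_nil.
    exact: actz.
  rewrite big_cons.
  have hq : islin q.2 by apply: hS; left.
  have hS' : forall r, List.In r S -> islin r.2 by move=> r hr; apply: hS; right.
  have -> : (fun x => \sum_(r <- q :: S) f r.1 * r.2 x) =
     (fun x => f q.1 * q.2 x + (fun x => \sum_(r <- S) f r.1 * r.2 x) x).
    by apply: functional_extensionality => ?; rewrite big_cons.
  by rewrite hA2 // ?IH //; apply: islin_sum.
have phi0 : forall c, phi 0 c = 0.
  move=> c; have := hphi1 (-1) 0 0 c.
  by rewrite scaleNr scale1r oppr0 add0r mulN1r addNr.
have [c hc] : exists c, phi m0 c != 0.
  apply: NNPP => hn; apply/negP: hm0; rewrite negbK; apply/eqP.
  apply: hinj; apply: functional_extensionality => c; rewrite phi0.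
  apply: NNPP => h0; apply: hn; exists c; by apply/eqP.
pose S := fun m => forall a, islin a -> phi (act a m) c = 0.
have hSsub : is_submodule act S.
  split.
  - by move=> a ha; rewrite act0 // phi0.
  - move=> a x y hx hy b hb; rewrite hA1 // hphi1 hx // hy //.
    by rewrite mulr0 addr0.
  - by move=> f hf x hx a ha; rewrite -hA3 //; apply: hx; apply: hconv.
have hS0 : forall x, S x -> x = 0.
  case: (hsimp S hSsub) => // hall.
  exfalso; have := hall m0 eps heps; rewrite hA4 => h.
  by move: hc; rewrite h eqxx.
pose X := [seq q.1 | p <- delta c, q <- delta p.2].
have [I [hI hIX]] := interp X.
have ratm0 : forall f, islin f ->
    act f m0 = \sum_(q <- I) f q.1 *: act q.2 m0.
  move=> f hf.
  pose f' := fun x => f x - \sum_(q <- I) f q.1 * q.2 x.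
  have hf' : islin f' by apply: islin_sub => //; apply: islin_sum.
  have f'X : forall y, y \in X -> f' y = 0.
    by move=> y hy; rewrite /f' -hIX // subrr.
  have hz : act f' m0 = 0.
    apply: hS0 => a ha; rewrite hphi2 // /conv.
    apply: big1_seq => p /andP [_ hp]; rewrite hphi2 //.
    rewrite /conv big1_seq ?mulr0 // => q /andP [_ hq].
    rewrite f'X ?mul0r //; apply/allpairsPdep; by exists p, q.
  have hfe : f = (fun x => 1 * f' x + (fun x => \sum_(q <- I) f q.1 * q.2 x) x).
    by apply: functional_extensionality => x; rewrite mul1r /f' subrK.
  rewrite {1}hfe hA2 //; last exact: islin_sum.
  by rewrite hz scaler0 add0r actsum.
pose R := fun m => exists s : seq (M * C),
    forall f, islin f -> act f m = \sum_(p <- s) f p.2 *: p.1.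
have hRsub : is_submodule act R.
  split.
  - by exists [::] => f hf; rewrite big_nil act0.
  - move=> a x y [sx hx] [sy hy].
    exists ([seq (a *: p.1, p.2) | p <- sx] ++ sy) => f hf.
    rewrite hA1 // hx // hy // big_cat big_map /= scaler_sumr; congr (_ + _).
    by apply: eq_bigr => p _; rewrite !scalerA mulrC.
  - move=> g hg x [sx hx].
    exists (flatten [seq [seq (g r.2 *: p.1, r.1) | r <- delta p.2] | p <- sx]).
    move=> f hf; rewrite -hA3 // hx; last exact: hconv.
    rewrite big_flatten big_map /=; apply: eq_bigr => p _.
    rewrite big_map /= /conv scaler_suml; apply: eq_bigr => r _.
    by rewrite scalerA.
case: (hsimp R hRsub) => [h0 | hall].
  exfalso; move/negP: hm0; apply; apply/eqP; apply: h0.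
  exists [seq (act q.2 m0, q.1) | q <- I] => f hf.
  by rewrite ratm0 // big_map.
exact: hall.
Qed.
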